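(* Let $M$ be a gasket automaton over $\Sigma=\{1,\dots,N\}$. For any $\mathbf x,\mathbf y,\mathbf z\in\Sigma^\infty$, $$\min\{T_M(\mathbf x,\mathbf y),T_M(\mathbf x,\mathbf z)\}\le T_M(\mathbf y,\mathbf z)+1.$$
   Context: A $\Sigma$-automaton $M$ has finite state set $Q=Q_0\cup\{Id,Exit\}$, input alphabet $\Sigma^2$, initial state $Id$, final state $Exit$, transition $\delta:Q\times\Sigma^2\to Q$ with $\delta(Id,(i,j))=Id$ iff $i=j$. Itinerary of $(\mathbf x,\mathbf y)\in\Sigma^\infty\times\Sigma^\infty$: $S_0=Id$, $S_k=\delta(S_{k-1},(x_k,y_k))$, stopped at $Exit$; surviving time $T_M(\mathbf x,\mathbf y)$ = largest $k$ with $S_k\neq Exit$ ($\infty$ if $Exit$ never reached; $\infty+1=\infty$). Triangle automaton: $\alpha,\beta,\gamma$ distinct elements of $\Sigma\cup\{-1,-2,-3\}$; $Q=\{S_{uv}:u\neq v\in\{\alpha,\beta,\gamma\}\}\cup\{Id,Exit\}$; $\delta(Id,(i,j))=S_{uv}\Rightarrow\delta(Id,(j,i))=S_{vu}$; $\delta(S_{uv},(i,j))=S_{uv}$ if $(i,j)=(v,u)$, else $Exit$. $\mathcal P_{uv}=\{(i,j):\delta(Id,(i,j))=S_{uv}\}$, $i\triangleleft_{uv}j$ iff $(i,j)\in\mathcal P_{uv}$ (iff $j\triangleleft_{vu}i$); $j$ is $uv$-minimal if there is no $i$ with $i\triangleleft_{uv}j$. Gasket automaton: triangle automaton with (Uniqueness)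 $i\triangleleft_{uv}j,i\triangleleft_{uv}j'\Rightarrow j=j'$; (Gathering) for $a,b,c\in\Sigma$ any two of $a\triangleleft_{\alpha\gamma}c$, $a\triangleleft_{\beta\gamma}b$, $b\triangleleft_{\alpha\beta}c$ imply the third; (Boundary) if $\alpha\in\Sigma$ it is $\alpha\gamma$- and $\alpha\beta$-minimal; if $\beta\in\Sigma$ it is $\beta\gamma$- and $\beta\alpha$-minimal; if $\gamma\in\Sigma$ it is $\gamma\alpha$- and $\gamma\beta$-minimal. *)

(* Defs.v *)
From HB Require Import structures.
From mathcomp Require Import all_boot.
From Stdlib Require Import ClassicalEpsilon.
Set Implicit Arguments. Unset Strict Implicit. Unset Printing Implicit Defensive.

(* Infinite words x in Sigma^infty are functions nat -> Sigma, 0-indexed: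
   x k is the letter x_{k+1} of the paper. *)

(* Extended naturals N u {oo}: None = oo. *)
Definition enat := option nat.
Definition esucc (t : enat) : enat := omap S t.
Definition emin (a b : enat) : enat :=
  match a, b with
  | None, _ => b
  | _, None => a
  | Some m, Some n => Some (minn m n)
  end.
Definition ele (a b : enat) : Prop :=
  match b with
  | None => True
  | Some n => match a with None => False | Some m => (m <= n)%N end
  end.

Section Automaton.
Variables (Sigma : Type) (Q : eqType).
Variables (delta : Q -> Sigma -> Sigma -> Q) (q_id q_exit : Q).

Fixpoint itinerary (x y : nat -> Sigma) (k : nat) : Q :=
  match k with
  | 0 => q_id
  | k'.+1 => let s := itinerary x y k' in
             if s == q_exit then q_exit else delta s (x k') (y k')
  end.

(* Surviving time: largest k with S_k <> Exit, i.e. (first hitting time of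
   Exit) - 1, and oo if Exit is never reached. *)
Definition surviving_time (x y : nat -> Sigma) : enat :=
  match excluded_middle_informative
          (exists k, itinerary x y k == q_exit) with
  | left H => Some (ex_minn H).-1
  | right _ => None
  end.
End Automaton.

(* The three corners alpha, beta, gamma are indexed by 0, 1, 2 : 'I_3.
   Their labels live in Sigma u {-1,-2,-3}, modelled as 'I_N + 'I_3
   (inr k standing for -(k+1)). *)
Definition dpair := {p : 'I_3 * 'I_3 | p.1 != p.2}.

Inductive tstate := TId | TExit | TS of dpair.

Definition tstate_enc (s : tstate) : option (option dpair) :=
  match s with TId => None | TExit => Some None | TS p => Some (Some p) end.
Definition tstate_dec (o : option (option dpair)) : tstate :=
  match o with None => TId | Some None => TExit | Some (Some p) => TS p end.
Lemma tstate_encK : cancel tstate_enc tstate_dec. Proof. by case. Qed.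
HB.instance Definition _ := Finite.copy tstate (can_type tstate_encK).

Section Triangle.
Variables (N : nat) (lab : 'I_3 -> 'I_N + 'I_3)
          (f : 'I_N -> 'I_N -> tstate).

Definition prec (u v : 'I_3) (i j : 'I_N) : bool :=
  match f i j with TS p => val p == (u, v) | _ => false end.

Definition tri_delta (s : tstate) (i j : 'I_N) : tstate :=
  match s with
  | TId => f i j
  | TExit => TExit
  | TS p => if (inl i, inl j) == (lab (val p).2, lab (val p).1)
            then TS p else TExit
  end.

Definition T_M (x y : nat -> 'I_N) : enat :=
  surviving_time tri_delta TId TExit x y.

Definition alpha : 'I_3 := inord 0.
Definition beta : 'I_3 := inord 1.
Definition gamma : 'I_3 := inord 2.

Definition triangle_automaton : Prop :=
  [/\ injective lab,
      forall i j, f i j = TId <-> i = j &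
      forall i j (p : dpair), f i j = TS p ->
        exists q : dpair, val q = ((val p).2, (val p).1) /\ f j i = TS q].

Definition minimal (u v : 'I_3) (j : 'I_N) : Prop := forall i, ~~ prec u v i j.

Definition gasket_automaton : Prop :=
  [/\
      forall u v i j j', prec u v i j -> prec u v i j' -> j = j',
      forall a b c,
        let A := prec alpha gamma a c in
        let B := prec beta gamma a b in
        let C := prec alpha beta b c in
        [/\ A -> B -> C, A -> C -> B & B -> C -> A] &
      [/\ forall a, lab alpha = inl a -> minimal alpha gamma a /\ minimal alpha beta a,
          forall b, lab beta = inl b -> minimal beta gamma b /\ minimal beta alpha b &
          forall c, lab gamma = inl c -> minimal gamma alpha c /\ minimal gamma beta c]].
End Triangle.

(* Main.v *)
Require Import Defs.
From mathcomp Require Import all_boot.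
From mathcomp Require Import zify.
From Stdlib Require Import ClassicalEpsilon.
Set Implicit Arguments. Unset Strict Implicit.

Lemma vA : val alpha = 0. Proof. by rewrite /= inordK. Qed.
Lemma vB : val beta = 1. Proof. by rewrite /= inordK. Qed.
Lemma vC : val gamma = 2. Proof. by rewrite /= inordK. Qed.
Lemma ord3 (u : 'I_3) : u = alpha \/ u = beta \/ u = gamma.
Proof. case: u => [[|[|[|]]] H]; [left|right;left|right;right|by []]; apply/val_inj; by rewrite ?vA ?vB ?vC. Qed.
Lemma nAB : alpha != beta. Proof. by rewrite -val_eqE vA vB. Qed.
Lemma nAC : alpha != gamma. Proof. by rewrite -val_eqE vA vC. Qed.
Lemma nBC : beta != gamma. Proof. by rewrite -val_eqE vB vC. Qed.

Notation IT lab f := (itinerary (@tri_delta _ lab f) TId TExit).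

Lemma it_exit_abs N (lab : 'I_3 -> 'I_N + 'I_3) f x y k m :
  IT lab f x y k = TExit -> k <= m -> IT lab f x y m = TExit.
Proof.
move=> H /subnKC <-; elim: (m - k) => [|d IH]; first by rewrite addn0.
by rewrite addnS /= IH eqxx.
Qed.

Lemma surv_le N (lab : 'I_3 -> 'I_N + 'I_3) f x y k m :
  IT lab f x y m != TExit -> k <= m -> IT lab f x y k != TExit.
Proof.
move=> H km; apply: contra H => /eqP Hk; apply/eqP; exact: it_exit_abs Hk km.
Qed.

Lemma it_ext N (lab : 'I_3 -> 'I_N + 'I_3) f x y x' y' m :
  (forall i, i < m -> x i = x' i) -> (forall i, i < m -> y i = y' i) ->
  IT lab f x y m = IT lab f x' y' m.
Proof.
elim: m => //= m IH Hx Hy.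
rewrite IH ?Hx ?Hy //; move=> i Hi; [apply: Hx|apply: Hy]; lia.
Qed.

Lemma it_id N (lab : 'I_3 -> 'I_N + 'I_3) f x y m :
  triangle_automaton lab f ->
  (forall i, i < m -> x i = y i) -> IT lab f x y m = TId.
Proof.
case=> _ Hid _; elim: m => //= m IH H.
rewrite IH; last by move=> i Hi; apply: H; lia.
by rewrite /= H //; apply/Hid.
Qed.

Lemma it_step N (lab : 'I_3 -> 'I_N + 'I_3) f x y m k p :
  triangle_automaton lab f ->
  (forall i, i < k -> x i = y i) -> f (x k) (y k) = TS p ->
  (forall i, k < i -> i < m -> inl (x i) = lab (val p).2 /\ inl (y i) = lab (val p).1) ->
  k < m -> IT lab f x y m = TS p.
Proof.
move=> Ht Hlt Hf Hc; elim: m Hc => // m IH Hc km /=.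
case: (ltngtP k m) => [km'||kE]; last 2 first.
- lia.
- subst k. by rewrite (it_id Ht Hlt) /= Hf.
rewrite IH //; last by move=> i H1 H2; apply: Hc => //; lia.
have [H1 H2] := Hc m km' (leqnn _). by rewrite /= H1 H2 eqxx.
Qed.

Lemma it_inv N (lab : 'I_3 -> 'I_N + 'I_3) f x y m :
  triangle_automaton lab f ->
  IT lab f x y m != TExit ->
  (forall i, i < m -> x i = y i) \/
  exists k p, [/\ k < m, forall i, i < k -> x i = y i, x k != y k,
     f (x k) (y k) = TS p &
     forall i, k < i -> i < m -> inl (x i) = lab (val p).2 /\ inl (y i) = lab (val p).1].
Proof.
move=> Ht; elim: m => [|m IH] H; first by left.
have Hm : IT lab f x y m != TExit by apply: surv_le H _.
case: (IH Hm) => [Heq|[k [p [km Hlt Hne Hf Hc]]]].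
- move: H; rewrite /= (it_id Ht Heq) /=.
  case: (eqVneq (x m) (y m)) => Exy H.
    left=> i Hi; case: (ltngtP i m) => [Hi'|Hi'|->]; [exact: Heq|lia|done].
  right; exists m; case Hf: (f (x m) (y m)) => [||p].
  + by case: Ht => _ Hid _; move/Hid: Hf => E; rewrite E eqxx in Exy.
  + by rewrite Hf in H.
  + exists p; split => //.
    move=> i H1 H2; lia.
- move: H; rewrite /= (it_step Ht Hlt Hf Hc km) /=.
  case: ifP => [/eqP [E1 E2] _|]; last by rewrite eqxx.
  right; exists k, p; split => //; first lia.
  move=> i Hi1 Hi2; case: (ltngtP i m) => [Hi'|Hi'|->]; [exact: Hc|lia|done].
Qed.

Lemma T_none N (lab : 'I_3 -> 'I_N + 'I_3) f x y :
  T_M lab f x y = None -> forall k, IT lab f x y k != TExit.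
Proof.
rewrite /T_M /surviving_time; case: excluded_middle_informative => // H _ k.
by apply/negP => Hk; apply: H; exists k.
Qed.

Lemma T_some N (lab : 'I_3 -> 'I_N + 'I_3) f x y t :
  T_M lab f x y = Some t -> IT lab f x y t != TExit /\ IT lab f x y t.+1 = TExit.
Proof.
rewrite /T_M /surviving_time; case: excluded_middle_informative => // H [<-].
case: ex_minnP => k Hk Hmin.
case: k Hk Hmin => [|k] Hk Hmin //=.
split; last exact/eqP.
by apply/negP => /Hmin; rewrite ltnn.
Qed.

Lemma prec_of N (f : 'I_N -> 'I_N -> tstate) i j p :
  f i j = TS p -> prec f (val p).1 (val p).2 i j.
Proof. by move=> H; rewrite /prec H; apply/eqP; exact: surjective_pairing. Qed.

Lemma of_prec N (f : 'I_N -> 'I_N -> tstate) u v i j :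
  prec f u v i j -> exists p, f i j = TS p /\ val p = (u, v).
Proof. by rewrite /prec; case: (f i j) => // p /eqP Hp; exists p. Qed.

Lemma f_sym N (lab : 'I_3 -> 'I_N + 'I_3) f i j p :
  triangle_automaton lab f -> f i j = TS p ->
  exists q, f j i = TS q /\ (val q).1 = (val p).2 /\ (val q).2 = (val p).1.
Proof. by case=> _ _ H /H [q [Hq Hf]]; exists q; rewrite Hq. Qed.

Lemma prec_sym N (lab : 'I_3 -> 'I_N + 'I_3) f u v i j :
  triangle_automaton lab f -> prec f u v i j -> prec f v u j i.
Proof.
move=> Ht /of_prec [p [Hf Hp]]; have [q [Hq [H1 H2]]] := f_sym Ht Hf.
by rewrite /prec Hq; apply/eqP; rewrite [val q]surjective_pairing H1 H2 Hp.
Qed.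

Lemma gath N (lab : 'I_3 -> 'I_N + 'I_3) f u u' w a y z :
  triangle_automaton lab f -> gasket_automaton lab f ->
  u != w -> u' != w -> u != u' -> prec f u w a y -> prec f u' w a z ->
  prec f u' u y z.
Proof.
move=> Ht [_ G _] h1 h2 h3 P1 P2.
have S1 := prec_sym Ht P1; have S2 := prec_sym Ht P2.
case: (ord3 u) => [Eu|[Eu|Eu]]; subst u; case: (ord3 u') => [Eu'|[Eu'|Eu']]; subst u';
  case: (ord3 w) => [Ew|[Ew|Ew]]; subst w;
  try (by rewrite ?eqxx in h1 h2 h3);
  first [ have [H1 H2 H3] := G a z y; first [by apply: (prec_sym Ht); eauto | by eauto]
        | have [H1 H2 H3] := G a y z; first [by apply: (prec_sym Ht); eauto | by eauto]
        | have [H1 H2 H3] := G z a y; first [by apply: (prec_sym Ht); eauto | by eauto]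
        | have [H1 H2 H3] := G y a z; first [by apply: (prec_sym Ht); eauto | by eauto]
        | have [H1 H2 H3] := G z y a; first [by apply: (prec_sym Ht); eauto | by eauto]
        | have [H1 H2 H3] := G y z a; first [by apply: (prec_sym Ht); eauto | by eauto] ].
Qed.

Lemma bmin N (lab : 'I_3 -> 'I_N + 'I_3) f v u a i :
  gasket_automaton lab f -> u != v -> lab v = inl a -> ~~ prec f v u i a.
Proof.
move=> [_ _ [Ha Hb Hc]] h.
case: (ord3 v) => [Ev|[Ev|Ev]]; subst v; case: (ord3 u) => [Eu|[Eu|Eu]]; subst u;
  try (by rewrite ?eqxx in h); move=> E;
  first [ by have [? ?] := Ha _ E | by have [? ?] := Hb _ E | by have [? ?] := Hc _ E ].
Qed.
Set Bullet Behavior "Strict Subproofs".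

Lemma key N (lab : 'I_3 -> 'I_N + 'I_3) f x y z m :
  triangle_automaton lab f -> gasket_automaton lab f ->
  IT lab f x y m.+1 != TExit -> IT lab f x z m.+1 != TExit ->
  IT lab f y z m != TExit.
Proof.
move=> Ht Hg Hxy Hxz.
have Hinj : injective lab by case: Ht.
have Uq : forall u v i j j', prec f u v i j -> prec f u v i j' -> j = j'
  by case: Hg.
case: (it_inv Ht Hxy) => [Ey|[k1 [p [k1m Lt1 Ne1 F1 C1]]]];
case: (it_inv Ht Hxz) => [Ez|[k2 [q [k2m Lt2 Ne2 F2 C2]]]].
- have E : forall i, i < m -> y i = z i.
    by move=> i Hi; rewrite -Ey -?Ez //; lia.
  by rewrite (it_id Ht E).
- rewrite (@it_ext _ lab f y z x z m); last by [].
    exact: surv_le Hxz (leqnSn m).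
  by move=> i Hi; rewrite Ey //; lia.
- have [p' [F' [P1 P2]]] := f_sym Ht F1.
  case: (ltnP k1 m) => km.
  + rewrite (@it_step _ lab f y z m k1 p' Ht) //.
    * by move=> i Hi; rewrite -Lt1 // Ez //; lia.
    * by rewrite -Ez //; lia.
    * move=> i H1 H2; have [A B] := C1 i H1 (ltnW H2).
      split; first by rewrite P2 B.
      by rewrite -Ez ?P1 ?A //; lia.
  + rewrite (it_id Ht) // => i Hi; rewrite -Lt1 ?Ez //; lia.
- case: (ltngtP k1 k2) => [k12|k21|E12].
  + have [p' [F' [P1 P2]]] := f_sym Ht F1.
    case: (ltnP k2 m) => k2m'.
    * exfalso.
      have [A1 _] := C1 k2 k12 k2m.
      have [A2 _] := C1 k2.+1 (ltnW k12) k2m'.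
      have [A3 _] := C2 k2.+1 (ltnSn _) k2m'.
      have E2 : (val q).2 = (val p).2 by apply: Hinj; rewrite -A2 -A3.
      have Pq := prec_sym Ht (prec_of F2).
      rewrite E2 in Pq.
      have hq : (val q).1 != (val p).2 by rewrite -E2; exact: (valP q).
      by move: Pq; apply/negP; apply: bmin Hg hq (esym A1).
    * rewrite (@it_step _ lab f y z m k1 p' Ht) //.
      -- by move=> i Hi; rewrite -Lt1 // Lt2 //; lia.
      -- by rewrite -Lt2.
      -- move=> i H1 H2; have [A B] := C1 i H1 (ltnW H2).
         split; first by rewrite P2 B.
         by rewrite -Lt2 ?P1 ?A //; lia.
      -- lia.
  + case: (ltnP k1 m) => k1m'.
    * exfalso.
      have [A1 _] := C2 k1 k21 k1m.
      have [A2 _] := C2 k1.+1 (ltnW k21) k1m'.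
      have [A3 _] := C1 k1.+1 (ltnSn _) k1m'.
      have E2 : (val p).2 = (val q).2 by apply: Hinj; rewrite -A2 -A3.
      have Pp := prec_sym Ht (prec_of F1).
      rewrite E2 in Pp.
      have hp : (val p).1 != (val q).2 by rewrite -E2; exact: (valP p).
      by move: Pp; apply/negP; apply: bmin Hg hp (esym A1).
    * rewrite (@it_step _ lab f y z m k2 q Ht) //.
      -- by move=> i Hi; rewrite -Lt1 ?Lt2 //; lia.
      -- by rewrite -Lt1.
      -- move=> i H1 H2; have [A B] := C2 i H1 (ltnW H2).
         split; last by [].
         by rewrite -Lt1 ?A //; lia.
      -- lia.
  + subst k2; rename k1 into k.
    case: (ltnP k m) => km; last first.
      rewrite (it_id Ht) // => i Hi; rewrite -Lt1 ?Lt2 //; lia.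
    have [A2 _] := C1 k.+1 (ltnSn _) km.
    have [A3 _] := C2 k.+1 (ltnSn _) km.
    have E2 : (val p).2 = (val q).2 by apply: Hinj; rewrite -A2 -A3.
    case: (eqVneq (y k) (z k)) => Eyz.
    * have Epq : p = q by move: F2; rewrite -Eyz F1 => -[].
      subst q.
      rewrite (it_id Ht) // => i Hi.
      case: (ltngtP i k) => [Hik|Hik|->] //; first by rewrite -Lt1 ?Lt2.
      have [_ B1] := C1 i Hik (ltnW Hi).
      have [_ B2] := C2 i Hik (ltnW Hi).
      by move: B1; rewrite -B2 => -[].
    * have h3 : (val p).1 != (val q).1.
        apply: contra Eyz => /eqP E1; apply/eqP.
        apply: (Uq (val p).1 (val p).2 (x k)); first exact: prec_of F1.
        by rewrite E1 E2; exact: prec_of F2.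
      have h1 : (val p).1 != (val p).2 by exact: (valP p).
      have h2 : (val q).1 != (val p).2 by rewrite E2; exact: (valP q).
      have Pq := prec_of F2; rewrite -E2 in Pq.
      have [r [Fr Er]] := of_prec (gath Ht Hg h1 h2 h3 (prec_of F1) Pq).
      rewrite (@it_step _ lab f y z m k r Ht) //.
      -- by move=> i Hi; rewrite -Lt1 ?Lt2.
      -- move=> i H1 H2; have [_ B1] := C1 i H1 (ltnW H2).
         have [_ B2] := C2 i H1 (ltnW H2).
         by rewrite Er.
Qed.

Theorem proposition3p1 (N : nat) (lab : 'I_3 -> 'I_N + 'I_3)
  (f : 'I_N -> 'I_N -> tstate)
  (Htri : triangle_automaton lab f) (Hgas : gasket_automaton lab f)
  (x y z : nat -> 'I_N) :
  ele (emin (T_M lab f x y) (T_M lab f x z)) (esucc (T_M lab f y z)).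
Proof.
case Hc: (T_M lab f y z) => [n|]; last by case: (emin _ _).
have [Hn Hn1] := T_some Hc.
have K : IT lab f x y n.+2 != TExit -> IT lab f x z n.+2 != TExit -> False.
  by move=> A B; have := key Htri Hgas A B; rewrite Hn1 eqxx.
case Ha: (T_M lab f x y) => [a|]; case Hb: (T_M lab f x z) => [b|] /=.
- have [Ha1 _] := T_some Ha; have [Hb1 _] := T_some Hb.
  case: (leqP a n.+1) => la; first by rewrite geq_min la.
  case: (leqP b n.+1) => lb; first by rewrite geq_min lb orbT.
  by exfalso; apply: K; [apply: surv_le Ha1 _ | apply: surv_le Hb1 _]; lia.
- have [Ha1 _] := T_some Ha; have Hb1 := T_none Hb.
  case: (leqP a n.+1) => la //.
  by exfalso; apply: K; [apply: surv_le Ha1 _; lia | apply: Hb1].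
- have [Hb1 _] := T_some Hb; have Ha1 := T_none Ha.
  case: (leqP b n.+1) => lb //.
  by exfalso; apply: K; [apply: Ha1 | apply: surv_le Hb1 _; lia].
- by apply: K; [apply: (T_none Ha) | apply: (T_none Hb)].
Qed.
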